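(* If $p>1-1/e^2$, then for every $n$, $0\le x_0(n)\le 1-\frac{2}{\log b}$.
   Context: Let $p\in(0,1)$ be constant, $q=1-p$, $b=1/q$, $\log$ the natural logarithm, $\gamma=\gamma(n)=2\log_b n-2\log_b\log_b n-2\log_b 2$, $\Delta=\gamma-\lfloor\gamma\rfloor\in[0,1)$. Define $\varphi_n(x)=(1-\Delta+x)\log_b(1-\Delta+x)+(1-\Delta)(\Delta-x)/2$, and let $x_0=x_0(n)$ be the smallest nonnegative $x$ with $\varphi_n(x)\le0$ (well defined since $\varphi_n(\Delta)=0$, and $x_0\in[0,\Delta]$). *)

(* Defs.v *)
From Stdlib Require Import Reals Lra.
Open Scope R_scope.

Definition qq (p : R) : R := 1 - p.
Definition bb (p : R) : R := / qq p.

Definition logb (p x : R) : R := ln x / ln (bb p).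

Definition gam (p : R) (n : nat) : R :=
  2 * logb p (INR n) - 2 * logb p (logb p (INR n)) - 2 * logb p 2.

(* Delta = gamma - floor gamma  (Int_part is the floor in Stdlib) *)
Definition Delta (p : R) (n : nat) : R :=
  gam p n - IZR (Int_part (gam p n)).

Definition phi (p : R) (n : nat) (x : R) : R :=
  (1 - Delta p n + x) * logb p (1 - Delta p n + x)
  + (1 - Delta p n) * (Delta p n - x) / 2.

Definition is_x0 (p : R) (n : nat) (x : R) : Prop :=
  0 <= x /\ phi p n x <= 0 /\ (forall y, 0 <= y < x -> 0 < phi p n y).

(* Main.v *)
Require Import Defs.
From Stdlib Require Import Reals Lra.
From Coquelicot Require Coquelicot.
Open Scope R_scope.

Module Aux.
Import Coquelicot.Coquelicot.
Lemma cont_aux c L k D m : 0 < c + m ->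
  continuity_pt (fun x => (c+x) * (ln (c+x) / L) + k * (D - x)/2) m.
Proof.
intros. set (f := fun x => _).
assert (Hd : ex_derive f m). { unfold f. auto_derive. lra. }
apply continuity_pt_filterlim. exact (ex_derive_continuous f m Hd).
Qed.
End Aux.


Lemma Delta_bounds (p : R) (n : nat) : 0 <= Defs.Delta p n < 1.
Proof. unfold Defs.Delta. destruct (base_Int_part (gam p n)). lra. Qed.

Lemma phi_cont (p : R) (n : nat) (m : R) : 0 <= m -> continuity_pt (phi p n) m.
Proof.
intros. destruct (Delta_bounds p n).
unfold phi, logb. apply (Aux.cont_aux (1 - Defs.Delta p n) (ln (bb p)) (1 - Defs.Delta p n) (Defs.Delta p n) m). lra.
Qed.

Lemma phi_D (p : R) (n : nat) : phi p n (Defs.Delta p n) = 0.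
Proof.
unfold phi, logb. replace (1 - Defs.Delta p n + Defs.Delta p n) with 1 by ring.
rewrite ln_1. field_simplify. unfold Rdiv. ring.
Abort.

Lemma phi_D (p : R) (n : nat) : phi p n (Defs.Delta p n) = 0.
Proof.
unfold phi, logb. replace (1 - Defs.Delta p n + Defs.Delta p n) with 1 by ring.
rewrite ln_1. replace (Defs.Delta p n - Defs.Delta p n) with 0 by ring.
unfold Rdiv. ring.
Qed.

Lemma ln_le_sub1 t : 0 < t -> ln t <= t - 1.
Proof. intros. pose proof (exp_ineq1_le (ln t)). rewrite exp_ln in H0; lra. Qed.

Lemma L_gt2 (p : R) : 0 < p -> p < 1 -> 1 - / (exp 1 ^ 2) < p -> 2 < ln (bb p).
Proof.
intros.
assert (He : exp 1 ^ 2 = exp 2).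
{ simpl. rewrite Rmult_1_r, <- exp_plus. f_equal; lra. }
rewrite He in H1.
assert (0 < exp 2) by apply exp_pos.
assert (/ exp 2 > 1 - p) by lra.
unfold bb, qq.
rewrite <- (ln_exp 2) at 1. apply ln_increasing. auto.
replace (exp 2) with (/ / exp 2) by (field; lra).
apply Rinv_lt_contravar. apply Rmult_lt_0_compat; lra. lra.
Qed.

Theorem lemma4 (p : R) (hp0 : 0 < p) (hp1 : p < 1)
  (hp : 1 - / (exp 1 ^ 2) < p) (n : nat) (hn : (2 <= n)%nat) :
  (exists x, is_x0 p n x) /\
  (forall x0, is_x0 p n x0 -> 0 <= x0 <= 1 - 2 / ln (bb p)).
Proof.
pose proof (L_gt2 p hp0 hp1 hp) as HL.
destruct (Delta_bounds p n) as [HD0 HD1].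
split.
- destruct (Rle_lt_dec (phi p n 0) 0) as [H0|H0].
  + exists 0. split; [lra|split; [auto|]]. intros; lra.
  + set (E := fun y => 0 <= y /\ forall z, 0 <= z <= y -> 0 < phi p n z).
    assert (Eb : bound E).
    { exists (Defs.Delta p n). intros y [Hy Hz].
      destruct (Rle_lt_dec y (Defs.Delta p n)); auto.
      specialize (Hz (Defs.Delta p n) ltac:(lra)). rewrite phi_D in Hz. lra. }
    assert (Ene : exists x, E x).
    { exists 0. split; [lra|]. intros z Hz. replace z with 0 by lra. auto. }
    destruct (completeness E Eb Ene) as [m [Hub Hlub]].
    assert (Hm0 : 0 <= m) by (apply Hub; destruct Ene as [x Hx]; unfold E; split; [lra|];
                              intros z Hz; replace z with 0 by lra; auto).
    assert (Hbelow : forall y, 0 <= y < m -> 0 < phi p n y).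
    { intros y Hy. apply Rnot_le_lt. intro Hc.
      assert (is_upper_bound E y).
      { intros e [He Hz]. destruct (Rle_lt_dec e y); auto.
        specialize (Hz y ltac:(lra)). lra. }
      specialize (Hlub y H). lra. }
    exists m. split; [auto|split; [|auto]].
    apply Rnot_lt_le. intro Hpos.
    pose proof (phi_cont p n m Hm0) as Hc.
    destruct (Hc (phi p n m) Hpos) as [al [Hal Hcl]].
    assert (E (m + al/2)).
    { split; [lra|]. intros z Hz.
      destruct (Rlt_le_dec z m) as [Hzm|Hzm]; [apply Hbelow; lra|].
      destruct (Req_dec z m) as [->|Hne]; auto.
      assert (Hd : R_dist (phi p n z) (phi p n m) < phi p n m).
      { apply Hcl. split. split; [exact I|auto]. simpl. unfold R_dist. rewrite Rabs_right; lra. }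
      unfold R_dist in Hd. apply Rabs_def2 in Hd. lra. }
    specialize (Hub _ H). lra.
- intros x0 [Hx0 [Hphi Hmin]]. split; auto.
  apply Rnot_lt_le. intro Hgt.
  assert (Hu : 0 < / ln (bb p) < 1/2).
  { split. apply Rinv_0_lt_compat; lra.
    replace (1/2) with (/2) by field. apply Rinv_lt_contravar; lra. }
  assert (Hud : 2 / ln (bb p) = 2 * / ln (bb p)) by (unfold Rdiv; ring).
  rewrite Hud in Hgt.
  destruct (Rle_lt_dec (Defs.Delta p n) (1 - 2 * / ln (bb p))) as [Hc|Hc].
  + specialize (Hmin (Defs.Delta p n) ltac:(lra)). rewrite phi_D in Hmin. lra.
  + set (y := 1 - 2 * / ln (bb p)).
    specialize (Hmin y ltac:(unfold y; lra)).
    revert Hmin. unfold phi, logb. fold y.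
    set (D := Defs.Delta p n) in *. set (L := ln (bb p)) in *. set (u := / L) in *.
    set (t := 1 - D + y).
    assert (Ht : 0 < t) by (unfold t, y; lra).
    pose proof (ln_le_sub1 t Ht) as Hln.
    assert (HLu : L * u = 1) by (unfold u; field; lra).
    replace (ln t / L) with (ln t * u) by (unfold u, Rdiv; ring).
    assert (t * (ln t * u) <= t * ((t - 1) * u)).
    { apply Rmult_le_compat_l; [lra|]. apply Rmult_le_compat_r; lra. }
    assert (Hkey : t * u - (1 - D) / 2 >= 0).
    { unfold t, y.
      assert (HL2 : u * (1 - D) * L = 1 - D) by (replace (u * (1 - D) * L) with ((1 - D) * (L * u)) by ring; rewrite HLu; ring).
      nra. }
    unfold t, y in *. nra.
Qed.
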